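(* Let $[S,T]$ be a Tamari interval of binary trees with $n$ nodes, and define $u_i$ as the number of nodes in the right subtree of node $i$ in $S$ ($i\in[n]$) and $v_j$ as the number of nodes in the left subtree of node $j$ in $T$ ($j\in[n]$). Then the following are equivalent: (a) for every $i\in[n-1]$, $u_i\neq 0$ or $v_{i+1}\neq 0$; (b) $S$ and $T$ have the same canopy.
   Context: Nodes of a binary tree with $n$ nodes are labeled $1,\dots,n$ in in-order. A right rotation replaces a subtree $((A,x,B),y,C)$ by $(A,x,(B,y,C))$; $S\leq_{\mathrm t}T$ (Tamari order) iff $T$ is obtained from $S$ by a sequence of right rotations, and a Tamari interval is a pair $[S,T]$ with $S\leq_{\mathrm t}T$. For each $i\in[n-1]$, exactly one of the following holds in a binary tree: node $i$ has empty right subtree, or node $i+1$ has empty left subtree; the canopy of the tree is the word $w\in\{R,L\}^{n-1}$ with $w_i=R$ in the first case and $w_i=L$ in the second. The pair $(u,v)$ in the claim is exactly the Tamari interval diagram associated with $[S,T]$ (via the Châtel–Pons interval-poset bijection), and condition (a) is the definition of a synchronized Tamari interval diagram; $[S,T]$ is called synchronized when (b) holds. *)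

(* Defs.v *)
From mathcomp Require Import all_boot.
Set Implicit Arguments. Unset Strict Implicit. Unset Printing Implicit Defensive.

(* Binary trees (unlabeled); nodes are labeled 1..n in in-order. *)
Inductive btree : Type := Leaf | Node of btree & btree.

Fixpoint bt_size (t : btree) : nat :=
  match t with Leaf => 0 | Node l r => (bt_size l + bt_size r).+1 end.

(* In-order list of the nodes, each recorded as
   (number of nodes of its left subtree, number of nodes of its right subtree).
   Entry k (0-indexed) corresponds to node k+1. *)
Fixpoint inorder_sizes (t : btree) : seq (nat * nat) :=
  match t with
  | Leaf => [::]
  | Node l r => inorder_sizes l ++ (bt_size l, bt_size r) :: inorder_sizes r
  end.

Definition left_size (t : btree) (i : nat) : nat := (nth (0, 0) (inorder_sizes t) i.-1).1.
Definition right_size (t : btree) (i : nat) : nat := (nth (0, 0) (inorder_sizes t) i.-1).2.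

Inductive right_rot : btree -> btree -> Prop :=
  | rot_root A B C : right_rot (Node (Node A B) C) (Node A (Node B C))
  | rot_left l l' r : right_rot l l' -> right_rot (Node l r) (Node l' r)
  | rot_right l r r' : right_rot r r' -> right_rot (Node l r) (Node l r').

Inductive tamari_le : btree -> btree -> Prop :=
  | tamari_refl t : tamari_le t t
  | tamari_step s t u : right_rot s t -> tamari_le t u -> tamari_le s u.

Inductive RL := R | L.

Definition canopy (t : btree) : seq RL :=
  [seq (if right_size t i == 0 then R else L) | i <- iota 1 (bt_size t).-1].

(* Main.v *)
Require Import Defs.
From mathcomp Require Import all_boot.
From mathcomp Require Import zify.

Notation ins := inorder_sizes.
Notation d0 := ((0, 0) : nat * nat).

Lemma size_ins t : size (ins t) = bt_size t.
Proof. by elim: t => //= l IHl r IHr; rewrite size_cat /= IHl IHr addnS. Qed.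

Lemma first_ins t : bt_size t != 0 -> (nth d0 (ins t) 0).1 = 0.
Proof.
elim: t => //= l IHl r _ _.
case: l IHl => [|a b] IH //.
have hp : 0 < bt_size (Node a b) by [].
rewrite nth_cat size_ins hp; exact: IH.
Qed.

Lemma last_ins t : bt_size t != 0 -> (nth d0 (ins t) (bt_size t).-1).2 = 0.
Proof.
elim: t => //= l _ r IHr _.
rewrite nth_cat size_ins.
have h1 : (bt_size l + bt_size r).+1.-1 < bt_size l = false by apply/negbTE; rewrite -leqNgt; lia.
rewrite h1.
have h2 : (bt_size l + bt_size r).+1.-1 - bt_size l = bt_size r by lia.
rewrite h2.
case: r IHr {h1 h2} => [|a b] IH //.
have h3 : bt_size (Node a b) = (bt_size (Node a b)).-1.+1 by [].
rewrite [in nth _ _ (bt_size _)]h3 /=.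
exact: IH.
Qed.

Lemma dich t k : k.+1 < bt_size t ->
  ((nth d0 (ins t) k).2 == 0) = ((nth d0 (ins t) k.+1).1 != 0).
Proof.
elim: t k => //= l IHl r IHr k hk.
rewrite !nth_cat !size_ins.
have [A|A] := boolP (k.+1 < bt_size l).
  have h : k < bt_size l by lia.
  by rewrite h IHl.
have [B|B] := boolP (k < bt_size l).
  have e : k = (bt_size l).-1 by lia.
  have e2 : k.+1 - bt_size l = 0 by lia.
  rewrite e2 /= e last_ins; last lia.
  rewrite eqxx; apply/esym/eqP; lia.
have [C|C] := boolP (k == bt_size l).
  rewrite (eqP C) subnn /=.
  have e2 : (bt_size l).+1 - bt_size l = 1 by lia.
  rewrite e2 /= first_ins; last lia.
  by rewrite eqxx /=; apply/eqP; lia.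
have e1 : k - bt_size l = (k - bt_size l).-1.+1 by lia.
have e2 : k.+1 - bt_size l = (k - bt_size l).-1.+2 by lia.
rewrite e1 e2 /=; apply: IHr; lia.
Qed.

Definition pw (s t : seq (nat * nat)) :=
  size s = size t /\ forall k, (nth d0 s k).2 <= (nth d0 t k).2.

Lemma pw_refl s : pw s s.
Proof. by split. Qed.

Lemma pw_cat s1 t1 s2 t2 : pw s1 t1 -> pw s2 t2 -> pw (s1 ++ s2) (t1 ++ t2).
Proof.
move=> [e1 h1] [e2 h2]; split; first by rewrite !size_cat e1 e2.
by move=> k; rewrite !nth_cat e1; case: ifP.
Qed.

Lemma pw_cons x y s t : x.2 <= y.2 -> pw s t -> pw (x :: s) (y :: t).
Proof.
move=> hxy [e h]; split; first by rewrite /= e.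
by case.
Qed.

Lemma rot_pw s t : right_rot s t -> bt_size s = bt_size t /\ pw (ins s) (ins t).
Proof.
elim=> [A B C|l l' r _ IH|l r r' _ IH].
- split; first by rewrite /=; lia.
  rewrite /= -catA cat_cons.
  apply: pw_cat; first exact: pw_refl.
  apply: pw_cons; first by rewrite /=; lia.
  apply: pw_cat; first exact: pw_refl.
  apply: pw_cons => //; exact: pw_refl.
- case: IH => e p. rewrite /= e; split => //. apply: pw_cat => //; apply: pw_cons => //; exact: pw_refl.
- case: IH => e p. rewrite /= e; split => //. apply: pw_cat; first exact: pw_refl.
  apply: pw_cons => //.
Qed.

Lemma tam_pw s t : tamari_le s t -> bt_size s = bt_size t /\ pw (ins s) (ins t).
Proof.
elim=> [u|a b c r _ [e [e' p]]]; first by split => //; exact: pw_refl.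
have [e2 [e2' p2]] := @rot_pw _ _ r.
split; first by rewrite e2.
split; first by rewrite e2'.
move=> k; exact: leq_trans (p2 k) (p k).
Qed.

Theorem proposition2p5 (n : nat) (S T : btree) :
  bt_size S = n -> bt_size T = n -> tamari_le S T ->
  ((forall i, 1 <= i <= n - 1 ->
      right_size S i != 0 \/ left_size T i.+1 != 0)
   <-> canopy S = canopy T).
Proof.
move=> hS hT hST.
have [_ [_ p]] := @tam_pw _ _ hST.
have key : forall i, 1 <= i <= n - 1 ->
   (right_size S i != 0 \/ left_size T i.+1 != 0) <->
   ((right_size S i == 0) = (right_size T i == 0)).
  move=> i /andP [h1 h2].
  have hd := @dich T i.-1.
  rewrite hT in hd.
  have {}hd := hd ltac:(lia).
  rewrite /left_size /right_size /=.
  have -> : i = i.-1.+1 by lia.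
  rewrite /=.
  move: hd (p i.-1).
  move: (nth d0 (ins S) i.-1).2 (nth d0 (ins T) i.-1).2 (nth d0 (ins T) i.-1.+1).1 => x y z.
  case: x => [|x]; case: y => [|y]; case: z => [|z] => hd hp; split;
   (try move=> [h|h]); (try move=> h); rewrite /= in hd hp h *; try done; try (by left); try (by right).
rewrite /canopy hS hT -eq_in_map; split.
- move=> H i; rewrite mem_iota => hi.
  have hi' : 1 <= i <= n - 1 by lia.
  by have /(key _ hi') -> := H i hi'.
- move=> H i hi; apply/(key _ hi).
  have := H i; rewrite mem_iota.
  have hh : (1 <= i < 1 + n.-1) by lia.
  move=> /(_ hh).
  by case: eqP; case: eqP.
Qed.
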